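(* Let $\mathbb{F}$ be an algebraically closed field of characteristic zero and $J_2=E_{12}+E_{23}$. Let $\underline{A}=(J_2,A_2,A_3)$ and $\underline{B}=(0,B_2,B_3)$ be elements of $\mathcal{N}_3^3$ such that $f(\underline{A})=f(\underline{B})$ for all $f\in S_{3,3}$. Then $f(\underline{A})=f(\underline{B})$ for all $f\in P_{3,3}$.
   Context: $E_{ij}$ is the $3\times3$ matrix unit. $\mathcal{N}_3^3$ is the set of triples of nilpotent $3\times3$ matrices over $\mathbb{F}$. $\mathrm{tr}(Y_{i_1}\cdots Y_{i_r})$ denotes the function $\underline{A}\mapsto\mathrm{tr}(A_{i_1}\cdots A_{i_r})$. $S_{3,3}$ is the set consisting of: $\mathrm{tr}(Y_iY_j),\ \mathrm{tr}(Y_i^2Y_j),\ \mathrm{tr}(Y_iY_j^2),\ \mathrm{tr}(Y_i^2Y_j^2),\ \mathrm{tr}(Y_i^2Y_j^2Y_iY_j)$ for $1\le i<j\le3$; $\mathrm{tr}(Y_1Y_2Y_3)$, $\mathrm{tr}(Y_1Y_3Y_2)$; $\mathrm{tr}(Y_i^2Y_jY_k)$ for $\{i,j,k\}=\{1,2,3\}$; $\mathrm{tr}(Y_1^2Y_2Y_1Y_3)$, $\mathrm{tr}(Y_2^2Y_1Y_2Y_3)$, $\mathrm{tr}(Y_3^2Y_1Y_3Y_2)$. $P_{3,3}=S_{3,3}\sqcup P'_{3,3}$, where $P'_{3,3}$ consists of $\mathrm{tr}(Y_i^2Y_j^2Y_k)$ and $\mathrm{tr}(Y_i^2Y_j^2Y_iY_k)$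 for $\{i,j,k\}=\{1,2,3\}$, and $\mathrm{tr}(Y_1^2Y_2^2Y_3^2)$. *)

(* Defs.v *)
From HB Require Import structures.
From mathcomp Require Import all_boot all_order all_algebra.
Set Implicit Arguments. Unset Strict Implicit. Unset Printing Implicit Defensive.
Import GRing.Theory.
Local Open Scope ring_scope.

Definition nilpotent_mx (F : fieldType) (n : nat) (A : 'M[F]_n) : Prop :=
  exists k : nat, A ^+ k = 0.

(* J_2 = E_12 + E_23 (indices shifted to 0-based ordinals). *)
Definition J2 (F : fieldType) : 'M[F]_3 :=
  delta_mx (0 : 'I_3) (1 : 'I_3) + delta_mx (1 : 'I_3) (2 : 'I_3).

(* Y_i evaluated at a triple (A1,A2,A3); indices 1,2,3 as in the paper. *)
Definition selY (F : fieldType) (A1 A2 A3 : 'M[F]_3) (i : nat) : 'M[F]_3 :=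
  match i with 1 => A1 | 2 => A2 | _ => A3 end.

(* tr(Y_{i_1} ... Y_{i_r}) evaluated at (A1,A2,A3). *)
Definition trw (F : fieldType) (A1 A2 A3 : 'M[F]_3) (w : seq nat) : F :=
  \tr (foldr (fun i M => selY A1 A2 A3 i *m M) 1%:M w).

Definition pairs_lt : seq (nat * nat) := [:: (1, 2); (1, 3); (2, 3)]%N.
Definition perms3 : seq (nat * nat * nat) :=
  [:: (1, 2, 3); (1, 3, 2); (2, 1, 3); (2, 3, 1); (3, 1, 2); (3, 2, 1)]%N.

Definition S33 : seq (seq nat) :=
  (flatten [seq [:: [:: ij.1; ij.2]; [:: ij.1; ij.1; ij.2]; [:: ij.1; ij.2; ij.2];
                   [:: ij.1; ij.1; ij.2; ij.2];
                   [:: ij.1; ij.1; ij.2; ij.2; ij.1; ij.2]] | ij <- pairs_lt])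
  ++ [:: [:: 1; 2; 3]; [:: 1; 3; 2]]%N
  ++ [seq [:: t.1.1; t.1.1; t.1.2; t.2] | t <- perms3]
  ++ [:: [:: 1; 1; 2; 1; 3]; [:: 2; 2; 1; 2; 3]; [:: 3; 3; 1; 3; 2]]%N.

Definition P'33 : seq (seq nat) :=
  [seq [:: t.1.1; t.1.1; t.1.2; t.1.2; t.2] | t <- perms3]
  ++ [seq [:: t.1.1; t.1.1; t.1.2; t.1.2; t.1.1; t.2] | t <- perms3]
  ++ [:: [:: 1; 1; 2; 2; 3; 3]]%N.

Definition P33 : seq (seq nat) := S33 ++ P'33.

(* Main.v *)
Require Import Defs.
From HB Require Import structures.
From mathcomp Require Import all_boot all_order all_algebra.
Set Implicit Arguments. Unset Strict Implicit.
Import GRing.Theory.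
Local Open Scope ring_scope.

Definition lvl (F : fieldType) n k (M : 'M[F]_n) :=
  forall i j : 'I_n, (j < i + k)%N -> M i j = 0.

Lemma lvl_mul (F : fieldType) n k l (M N : 'M[F]_n) :
  lvl k M -> lvl l N -> lvl (k + l) (M *m N).
Proof.
move=> hM hN i j hij; rewrite mxE big1 // => m _.
case: (ltnP m (i + k)) => hm; first by rewrite hM // mul0r.
by rewrite hN ?mulr0 // (leq_trans hij) // addnA leq_add2r.
Qed.

Lemma lvl1 (F : fieldType) n : lvl 0 (1%:M : 'M[F]_n).
Proof. by move=> i j; rewrite addn0 mxE => h; case: eqP => // e; move: h; rewrite e ltnn. Qed.

Lemma lvl_big (F : fieldType) k (M : 'M[F]_3) : (3 <= k)%N -> lvl k M -> M = 0.
Proof.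
move=> hk hM; apply/matrixP => i j; rewrite mxE hM //.
by rewrite (leq_trans (ltn_ord j)) // (leq_trans hk) // leq_addl.
Qed.

Lemma foldr_lvl (F : fieldType) (A1 A2 A3 : 'M[F]_3) w :
  (forall i, lvl 1 (selY A1 A2 A3 i)) ->
  lvl (size w) (foldr (fun i M => selY A1 A2 A3 i *m M) 1%:M w).
Proof.
move=> h; elim: w => [|a w IH] /=; first exact: lvl1.
by rewrite -[(size w).+1]add1n; apply: lvl_mul.
Qed.

Lemma foldr_zero (F : fieldType) (B2 B3 : 'M[F]_3) w :
  (1%N \in w) -> trw 0 B2 B3 w = 0.
Proof.
rewrite /trw => h; suff ->: foldr (fun i M => selY 0 B2 B3 i *m M) 1%:M w = 0 by rewrite mxtrace0.
elim: w h => [|a w IH] //=; rewrite inE => /orP [/eqP <-|/IH ->]; first by rewrite mul0mx.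
by rewrite mulmx0.
Qed.


Lemma o1 : lift ord0 ord0 = 1 :> 'I_3. Proof. exact: val_inj. Qed.
Lemma o2 : lift ord0 (lift ord0 ord0) = 2 :> 'I_3. Proof. exact: val_inj. Qed.
Lemma o0 : ord0 = 0 :> 'I_3. Proof. exact: val_inj. Qed.

Ltac simp := rewrite ?o1 ?o2 ?o0 ?(add0r, addr0, mul0r, mul1r, mulr0, mulr1).

Lemma trJ (F : fieldType) (M : 'M[F]_3) : \tr (J2 F *m M) = M 1 0 + M 2 1.
Proof.
rewrite /mxtrace !big_ord_recl big_ord0 /J2 !mxE !big_ord_recl !big_ord0 !mxE /=; simp; done.
Qed.

Lemma trJJ (F : fieldType) (M : 'M[F]_3) : \tr (J2 F *m (J2 F *m M)) = M 2 0.
Proof.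
rewrite /mxtrace /J2 !(mxE, big_ord_recl, big_ord0) /=; simp; done.
Qed.

Lemma sq20 (F : fieldType) (M : 'M[F]_3) : (M *m M) 2 0 = M 2 0 * M 0 0 + M 2 1 * M 1 0 + M 2 2 * M 2 0.
Proof.
rewrite !mxE !big_ord_recl big_ord0 /=; simp; by rewrite addrA.
Qed.

Lemma lvlJ (F : fieldType) : lvl 1 (J2 F).
Proof.
move=> [[|[|[|?]]] ?] [[|[|[|?]]] ?] //= _; by rewrite !mxE -!val_eqE /= ?addr0.
Qed.

Lemma diag_mul (F : fieldType) (M N : 'M[F]_3) i : lvl 0 M -> lvl 0 N ->
  (M *m N) i i = M i i * N i i.
Proof.
move=> hM hN; rewrite mxE (bigD1 i) //= big1 ?addr0 // => m /negPf hm.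
case: (ltnP m i) => h; first by rewrite hM ?mul0r // addn0.
by rewrite hN ?mulr0 // addn0 ltn_neqAle h andbT eq_sym; apply/negbT; rewrite -hm.
Qed.

Lemma pow_up (F : fieldType) (X : 'M[F]_3) k : lvl 0 X ->
  lvl 0 (X ^+ k) /\ forall i, (X ^+ k) i i = (X i i) ^+ k.
Proof.
move=> hX; elim: k => [|k [IH1 IH2]].
  by split; [exact: lvl1 | move=> i; rewrite expr0 mxE eqxx].
rewrite exprS -mulmxE; split; first by have := lvl_mul hX IH1.
by move=> i; rewrite diag_mul // IH2 exprS.
Qed.

Lemma key (F : fieldType) (X : 'M[F]_3) k : X ^+ k = 0 ->
  \tr (J2 F *m X) = 0 -> \tr (J2 F *m (J2 F *m X)) = 0 ->
  \tr (J2 F *m (J2 F *m (X *m X))) = 0 -> lvl 1 X.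
Proof.
rewrite trJ !trJJ sq20 => hk hab hc; rewrite hc !(mulr0, mul0r, addr0, add0r).
have ha : X 1 0 = - X 2 1 by apply/eqP; rewrite -subr_eq0 opprK hab.
rewrite ha mulrN => /eqP; rewrite oppr_eq0 mulf_eq0 orbb => /eqP hb.
move: ha; rewrite hb oppr0 => ha.
have hl : lvl 0 X.
  move=> [[|[|[|?]]] Hi] [[|[|[|?]]] Hj] //= _.
  - rewrite (_ : Ordinal Hi = 1); last exact: val_inj.
    rewrite (_ : Ordinal Hj = 0); last exact: val_inj.
    exact: ha.
  - rewrite (_ : Ordinal Hi = 2); last exact: val_inj.
    rewrite (_ : Ordinal Hj = 0); last exact: val_inj.
    exact: hc.
  - rewrite (_ : Ordinal Hi = 2); last exact: val_inj.
    rewrite (_ : Ordinal Hj = 1); last exact: val_inj.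
    exact: hb.
have [_ hd] := pow_up k hl.
move=> i j; rewrite addn1 ltnS leq_eqVlt => /orP [/eqP hij|]; last by move=> h; apply: hl; rewrite addn0.
have -> : j = i by apply: val_inj.
have := hd i; rewrite hk mxE => /esym/eqP; rewrite expf_eq0 => /andP [_ /eqP] //.
Qed.
Unset Implicit Arguments.

Theorem lemma8p2 (F : closedFieldType) (hchar : [pchar F] =i pred0)
  (A2 A3 B2 B3 : 'M[F]_3) :
  nilpotent_mx (J2 F) -> nilpotent_mx A2 -> nilpotent_mx A3 ->
  nilpotent_mx (0 : 'M[F]_3) -> nilpotent_mx B2 -> nilpotent_mx B3 ->
  (forall w, w \in S33 -> trw (J2 F) A2 A3 w = trw 0 B2 B3 w) ->
  forall w, w \in P33 -> trw (J2 F) A2 A3 w = trw 0 B2 B3 w.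
Proof.
move=> _ [k2 hk2] [k3 hk3] _ _ _ H w; rewrite mem_cat => /orP [/H //| hw].
have tr2 : forall a b, trw (J2 F) A2 A3 [:: a; b] = \tr (selY (J2 F) A2 A3 a *m selY (J2 F) A2 A3 b).
  by move=> a b; rewrite /trw /foldr mulmx1.
have tr3 : forall a b c, trw (J2 F) A2 A3 [:: a; b; c] = \tr (selY (J2 F) A2 A3 a *m (selY (J2 F) A2 A3 b *m selY (J2 F) A2 A3 c)).
  by move=> a b c; rewrite /trw /foldr mulmx1.
have tr4 : forall a b c d, trw (J2 F) A2 A3 [:: a; b; c; d] = \tr (selY (J2 F) A2 A3 a *m (selY (J2 F) A2 A3 b *m (selY (J2 F) A2 A3 c *m selY (J2 F) A2 A3 d))).
  by move=> a b c d; rewrite /trw /foldr mulmx1.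
have h12 := H [:: 1; 2]%N isT.
have h112 := H [:: 1; 1; 2]%N isT.
have h1122 := H [:: 1; 1; 2; 2]%N isT.
have h13 := H [:: 1; 3]%N isT.
have h113 := H [:: 1; 1; 3]%N isT.
have h1133 := H [:: 1; 1; 3; 3]%N isT.
rewrite (@foldr_zero _ B2 B3) // tr2 /= in h12.
rewrite (@foldr_zero _ B2 B3) // tr3 /= in h112.
rewrite (@foldr_zero _ B2 B3) // tr4 /= in h1122.
rewrite (@foldr_zero _ B2 B3) // tr2 /= in h13.
rewrite (@foldr_zero _ B2 B3) // tr3 /= in h113.
rewrite (@foldr_zero _ B2 B3) // tr4 /= in h1133.
have s2 := key hk2 h12 h112 h1122.
have s3 := key hk3 h13 h113 h1133.
have : all (fun w => (2 < size w) && (1 \in w))%N P'33 by [].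
move/allP/(_ _ hw)/andP => [hs h1].
have hsel : forall i, lvl 1 (selY (J2 F) A2 A3 i).
  by case=> [|[|[|i]]] //=; exact: lvlJ.
by rewrite (@foldr_zero _ B2 B3 w) // /trw (lvl_big hs (foldr_lvl (w:=w) hsel)) mxtrace0.
Qed.
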